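(* Let $S,T\subseteq\mathbb{Z}_{>0}$ be finite with $T\preceq S$, and let $x\in T$ be such that $T\setminus\{x\}\preceq S$. Then $(T\triangleleft S)(i)\ge((T\setminus\{x\})\triangleleft S)(i)$ for all $i\in[|S|]$.
   Context: For a finite set $S\subseteq\mathbb{Z}_{>0}$, $S(i)$ denotes its $i$th smallest element. $T\preceq S$ means $|T|\ge|S|$ and $T(i)<S(i)$ for all $i\in[|S|]$. For finite $S,T$, $T\triangleleft S$ is computed by going through $S$ from largest to smallest; each $s$ picks the largest element of $T$ less than $s$ not yet picked (if one exists); $T\triangleleft S$ is the set of picked elements. *)

(* Defs.v *)
From mathcomp Require Import all_boot.
From mathcomp Require Import finmap.
Set Implicit Arguments. Unset Strict Implicit. Unset Printing Implicit Defensive.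
Local Open Scope fset_scope.

(* S(i): the i-th smallest element of S, 1-indexed (i in 1..|S|). *)
Definition elt (S : {fset nat}) (i : nat) : nat := nth 0 (sort leq S) i.-1.

Definition preceq (T S : {fset nat}) : Prop :=
  #|` S| <= #|` T| /\ forall i, 1 <= i <= #|` S| -> elt T i < elt S i.

Definition pick_lt (avail : seq nat) (s : nat) : option nat :=
  let c := [seq t <- avail | t < s] in
  if c is [::] then None else Some (\max_(t <- c) t).

(* ss is traversed in the given order; avail = not yet picked elements of T *)
Fixpoint tri_rec (avail : seq nat) (ss : seq nat) : seq nat :=
  match ss with
  | [::] => [::]
  | s :: ss' =>
      match pick_lt avail s with
      | Some t => t :: tri_rec (rem t avail) ss'
      | None => tri_rec avail ss'
      end
  end.

Definition tri (T S : {fset nat}) : {fset nat} :=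
  seq_fset tt (tri_rec T (rev (sort leq S))).

(* Main.v *)
Require Import Defs.
From mathcomp Require Import all_boot.
From mathcomp Require Import finmap.
Local Open Scope fset_scope.

Lemma max_mem (c : seq nat) : c != [::] -> \max_(t <- c) t \in c.
Proof.
elim: c => [//|a c IH] _; rewrite big_cons.
case: c IH => [|b c] IH; first by rewrite big_nil maxn0 mem_seq1.
have /(_ isT) IH' := IH.
move: IH'; set m := \max_(_ <- _) _ => IH'.
rewrite inE; case: (leqP a m) => h.
  by rewrite IH' orbT.
by rewrite eqxx.
Qed.

Lemma pick_ltP A s : match pick_lt A s with
  | Some a => [/\ a \in A, a < s & forall t, t \in A -> t < s -> t <= a]
  | None => forall t, t \in A -> s <= t end.
Proof.
rewrite /pick_lt.
case E: [seq t <- A | t < s] => [|b c].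
  move=> t tA; rewrite leqNgt; apply/negP => ts.
  have : t \in [seq t <- A | t < s] by rewrite mem_filter ts tA.
  by rewrite E.
rewrite -E.
have : \max_(t <- [seq t <- A | t < s]) t \in [seq t <- A | t < s].
  by apply: max_mem; rewrite E.
rewrite mem_filter => /andP [h1 h2]; split => // t tA ts.
by apply: (leq_bigmax_seq (F := id)) => //; rewrite mem_filter ts tA.
Qed.

Lemma pick_perm A A' s : perm_eq A A' -> pick_lt A s = pick_lt A' s.
Proof.
move=> p; rewrite /pick_lt.
have p' := perm_filter (fun t => t < s) p.
have pb := perm_big (op := maxn) (x := 0) (P := xpredT) (F := id) _ p'.
have ps := perm_size p'.
move: pb ps; clear p'.
case: [seq t <- A | t < s] => [|a c]; case: [seq t <- A' | t < s] => [|b d] //=.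
by move=> ->.
Qed.

Lemma perm_rem' (t : nat) A A' : perm_eq A A' -> perm_eq (rem t A) (rem t A').
Proof.
move=> p; case tA: (t \in A).
  have tA' : t \in A' by rewrite -(perm_mem p).
  rewrite -(perm_cons t); apply: perm_trans (perm_to_rem tA'); rewrite perm_sym.
  by apply: perm_trans (perm_to_rem tA); rewrite perm_sym.
have tA' : t \notin A' by rewrite -(perm_mem p) tA.
by rewrite !rem_id // tA.
Qed.

Lemma tri_perm ss A A' : perm_eq A A' -> tri_rec A ss = tri_rec A' ss.
Proof.
elim: ss A A' => [//|s ss IH] A A' p /=.
rewrite (@pick_perm A A' s p); case: (pick_lt A' s) => [t|]; last exact: IH.
by congr (_ :: _); apply: IH; apply: perm_rem'.
Qed.
Lemma perm_cons2 (a b c : nat) s t :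
  perm_eq (a :: s) (b :: t) -> perm_eq (a :: c :: s) (b :: c :: t).
Proof. move/permP=> h; apply/permP => p /=; move: (h p) => /= h'; by rewrite addnCA h' addnCA. Qed.

Lemma swap2 (a b : nat) s : perm_eq (a :: b :: s) (b :: a :: s).
Proof. by apply/permP => p /=; rewrite addnCA. Qed.

Lemma main_inv ss : forall y B,
  (exists2 z, z <= y & perm_eq (y :: tri_rec B ss) (z :: tri_rec (y::B) ss))
  \/ perm_eq (tri_rec (y::B) ss) (y :: tri_rec B ss).
Proof.
elim: ss => [|s ss IH] y B /=; first by left; exists y.
have hA := pick_ltP (y :: B) s; have hB := pick_ltP B s.
case: (pick_lt B s) hB => [b [bB bs bmax]|hB];
  case: (pick_lt (y :: B) s) hA => [a [aA as_ amax]|hA].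
- have ba : b <= a by apply: amax => //; rewrite inE bB orbT.
  case: (eqVneq a b) => [eab|nab].
  + subst a.
    have pr : perm_eq (rem b (y :: B)) (y :: rem b B).
      rewrite /=; case: (eqVneq y b) => [->|//].
      by apply: perm_to_rem.
    rewrite (@tri_perm ss _ _ pr).
    case: (IH y (rem b B)) => [[z zy pz]|pz]; [left; exists z => //|right].
      exact: perm_cons2.
    rewrite -(perm_cons b) in pz; apply: (perm_trans pz); exact: swap2.
  + have ay : a = y.
      move: aA; rewrite inE => /orP [/eqP //|aB].
      by move: (bmax a aB as_) => ab; case/eqP: nab; apply/eqP; rewrite eqn_leq ab ba.
    subst a.
    have bly : b < y by rewrite ltn_neqAle eq_sym nab ba.
    rewrite /= eqxx (@tri_perm ss _ _ (perm_to_rem bB)).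
    case: (IH b (rem b B)) => [[z zb pz]|pz].
      left; exists z; first by apply: leq_trans zb (ltnW bly).
      rewrite -(perm_cons y) in pz; apply: (perm_trans pz); exact: swap2.
    by right; rewrite perm_cons.
- by move: (hA b); rewrite inE bB orbT => /(_ isT); rewrite leqNgt bs.
- have ay : a = y.
    move: aA; rewrite inE => /orP [/eqP //|aB].
    by move: (hB a aB); rewrite leqNgt as_.
  subst a; right; by rewrite /= eqxx.
- exact: IH.
Qed.

Lemma size_tri A ss : size (tri_rec A ss) <= size ss.
Proof.
elim: ss A => [//|s ss IH] A /=.
case: (pick_lt A s) => [t|] /=; first exact: IH.
exact: leq_trans (IH A) (leqnSn _).
Qed.

Lemma uniq_tri ss : forall A, uniq A -> uniq (tri_rec A ss) /\ {subset tri_rec A ss <= A}.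
Proof.
elim: ss => [//|s ss IH] A uA /=.
have := pick_ltP A s; case: (pick_lt A s) => [t [tA _ _]|_]; last exact: IH.
have [u sub] := IH (rem t A) (rem_uniq t uA).
split.
  rewrite /= u andbT; apply/negP => /sub; by rewrite mem_rem_uniqF.
move=> w; rewrite inE => /orP [/eqP -> //|/sub]; exact: mem_rem.
Qed.

Lemma perfect ss : forall A, sorted (fun a b => b <= a) ss ->
  (forall j, j < size ss -> size ss - j <= count (fun t => t < nth 0 ss j) A) ->
  size (tri_rec A ss) = size ss.
Proof.
elim: ss => [//|s ss IH] A srt hc /=.
have h0 := hc 0 isT; rewrite subn0 /= in h0.
have := pick_ltP A s; case: (pick_lt A s) => [a [aA as_ amax]|hn]; last first.
  move: h0; rewrite (eq_in_count (a2 := pred0)) ?count_pred0 // => t tA /=.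
  by rewrite ltnNge hn.
congr S; apply: IH.
  by move: srt => /= /path_sorted.
have all_le : all (fun b => b <= s) ss.
  move: srt => /=; apply: order_path_min => x y z h1 h2; exact: leq_trans h1.
move=> j jlt.
have hj := hc j.+1 jlt; rewrite /= in hj.
set si := nth 0 ss j in hj *.
have sis : si <= s by apply: (allP all_le); rewrite mem_nth.
have cA := (permP (perm_to_rem aA)) (fun t => t < si).
rewrite /= in cA.
case: (ltnP a si) => asi.
  have e : count (fun t => t < si) A = count (fun t => t < s) A.
    apply: eq_in_count => t tA /=.
    case: (ltnP t s) => ts.
      by rewrite (leq_ltn_trans (amax t tA ts) asi).
    by apply/negbTE; rewrite -leqNgt (leq_trans sis ts).
  rewrite asi add1n e in cA.
  have : size ss - j <= (count (fun t => t < s) A).-1.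
    rewrite -subn1; apply: leq_trans (leq_sub2r 1 h0).
    by rewrite subn1 leq_subr.
  by rewrite cA.
rewrite ltnNge asi add0n in cA.
by rewrite -cA.
Qed.

Lemma L1 (s : seq nat) i : sorted leq s -> i < size s ->
  i < count (fun t => t <= nth 0 s i) s.
Proof.
elim: s i => [//|a s IH] [|i] srt /=; first by rewrite leqnn.
move=> lt.
have ps := path_sorted srt.
have al : all (leq a) s by apply: order_path_min => //; exact: leq_trans.
have ai : a <= nth 0 s i by apply: (allP al); rewrite mem_nth.
by rewrite ai add1n ltnS IH.
Qed.

Lemma L2 (s : seq nat) i v : sorted leq s -> i < count (fun t => t <= v) s ->
  nth 0 s i <= v.
Proof.
elim: s i => [//|a s IH] [|i] srt /=.
  have al : all (leq a) s by apply: order_path_min => //; exact: leq_trans.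
  case: (leqP a v) => // av; rewrite add0n -has_count => /hasP [t ts tv].
  by move: (allP al t ts) => at_; move: (leq_trans at_ tv); rewrite leqNgt av.
move=> h; apply: IH; first exact: path_sorted srt.
by case: (a <= v) h => /=; rewrite ?add1n ?add0n // => /ltnW.
Qed.

Lemma cmp (PA PB : seq nat) y z i : z <= y -> perm_eq (y :: PB) (z :: PA) ->
  i < size PA -> nth 0 (sort leq PB) i <= nth 0 (sort leq PA) i.
Proof.
move=> zy p ilt.
set v := nth 0 (sort leq PA) i.
have h1 : i < count (fun t => t <= v) PA.
  rewrite -(permP (permEl (perm_sort leq PA))).
  apply: (@L1 (sort leq PA) i); [exact: (sort_sorted leq_total) | by rewrite size_sort].
apply: L2; first exact: (sort_sorted leq_total).
rewrite (permP (permEl (perm_sort leq PB))).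
have := (permP p) (fun t => t <= v); rewrite /=.
case: (leqP y v) => yv.
  by rewrite (leq_trans zy yv) !add1n => -[->].
by case: (z <= v) => /=; rewrite ?add1n ?add0n => ->; [apply: ltnW|].
Qed.

Lemma sort_fset (P : seq nat) : uniq P -> sort leq (seq_fset tt P) = sort leq P.
Proof.
move=> u; apply/(perm_sortP leq_total leq_trans anti_leq).
by rewrite -{2}(undup_id u) seq_fset_perm.
Qed.

Theorem lemma4p11 (S T : {fset nat}) (x : nat) :
  (forall s, s \in S -> 0 < s) ->
  (forall t, t \in T -> 0 < t) ->
  preceq T S ->
  x \in T ->
  preceq (T `\ x) S ->
  forall i, 1 <= i <= #|` S| ->
    elt (tri (T `\ x) S) i <= elt (tri T S) i.
Proof.
move=> _ _ _ xT [cardB pB] i /andP [i1 ik].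
rewrite /elt /tri.
set ss := rev (sort leq S).
set B : seq nat := (T `\ x : {fset nat}).
have uB : uniq B by apply: fset_uniq.
have xB : x \notin B by rewrite /B in_fsetD1 eqxx.
have pAB : perm_eq (T : seq nat) (x :: B).
  apply: uniq_perm; [exact: fset_uniq | by rewrite /= xB uB|].
  move=> t; rewrite inE /B in_fsetD1.
  by case: (eqVneq t x) => [->|]; rewrite ?xT.
rewrite (@tri_perm ss _ _ pAB).
have sz : size ss = #|` S| by rewrite size_rev size_sort.
have szB : size (tri_rec B ss) = size ss.
  apply: perfect.
    by rewrite rev_sorted; apply: (sort_sorted leq_total).
  move=> j jlt.
  rewrite sz in jlt *.
  have kj1 : 1 <= #|` S| - j by rewrite subn_gt0.
  have kjk : #|` S| - j <= #|` S| by rewrite leq_subr.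
  have := pB (#|` S| - j) (introT andP (conj kj1 kjk)).
  rewrite /elt.
  have e1 : (#|` S| - j).-1 = #|` S| - j.+1 by rewrite subnS.
  rewrite e1 /ss nth_rev ?size_sort // => lt.
  rewrite -(permP (permEl (perm_sort leq B))).
  apply: leq_trans (sub_count (a1 := fun t => t <= nth 0 (sort leq B) (#|` S| - j.+1)) _ _).
    have := @L1 (sort leq B) (#|` S| - j.+1) (sort_sorted leq_total _).
    rewrite size_sort -e1 prednK // => h; apply: h.
    exact: leq_trans (leq_subr _ _) cardB.
  move=> t /= tle; exact: leq_ltn_trans tle lt.
have uxB : uniq (x :: B) by rewrite /= xB uB.
have [uA _] := @uniq_tri ss _ uxB.
have [uPB _] := @uniq_tri ss _ uB.
rewrite !sort_fset //.
have szA := size_tri (x :: B) ss.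
case: (main_inv ss x B) => [[z zx p]|p]; last first.
  by move: (perm_size p) szA; rewrite /= szB => ->; rewrite ltnn.
have szA' : size (tri_rec (x :: B) ss) = #|` S|.
  by move: (perm_size p); rewrite /= szB sz => -[<-].
apply: (@cmp (tri_rec (x :: B) ss) (tri_rec B ss) x z (i.-1) zx p); rewrite szA'.
by rewrite prednK.
Qed.
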